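(* Let $g(t)$, $t\in[0,T)$, be the maximal Ricci flow solution on $S^1\times S^3$ starting from a metric $g_0=\phi^2dz^2+a^2\omega^1\otimes\omega^1+b^2\omega^2\otimes\omega^2+c^2\omega^3\otimes\omega^3$ with $a\le b\le c$ at $t=0$. Suppose that at time $t=0$ we have $0<a$ and $1\le \max_s\left(\frac{c}{a}\right)\le\lambda$ for some constant $\lambda\ge1$. Then $1\le \frac{c}{a}\le\lambda$ for all $(z,t)\in S^1\times[0,T)$.
   Context: $S^3=SU(2)$ carries a global left-invariant frame $E_1,E_2,E_3$ with $[E_i,E_j]=-2\epsilon_{ijk}E_k$ and dual coframe $\omega^i$; $z\in S^1=[0,2\pi)$ and $\phi,a,b,c$ are positive smooth $2\pi$-periodic functions. The Ricci flow $\partial_tg=-2\mathrm{Ric}(g)$ preserves this form, with $\phi,a,b,c$ depending on $(z,t)$; $s$ is the arclength coordinate $ds=\phi\,dz$. *)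

(* Defs.v *)
(* Honest frame-based definition of the Ricci tensor for metrics on
   S^1 x SU(2) of the form  g = phi^2 dz^2 + a^2 w1^2 + b^2 w2^2 + c^2 w3^2,
   computed in the global frame X_0 = d/dz, X_i = E_i (i=1,2,3) with
   [E_i,E_j] = -2 eps_ijk E_k, [d/dz, E_i] = 0, via the Koszul formula. *)
From Stdlib Require Import Reals Lra Arith.
From Coquelicot Require Import Coquelicot.
Open Scope R_scope.

Definition sum4 (F : nat -> R) : R := F 0%nat + F 1%nat + F 2%nat + F 3%nat.

Definition eps3 (i j k : nat) : R :=
  match i, j, k return R with
  | S O, S (S O), S (S (S O)) => 1
  | S (S O), S (S (S O)), S O => 1
  | S (S (S O)), S O, S (S O) => 1
  | S O, S (S (S O)), S (S O) => -1
  | S (S (S O)), S (S O), S O => -1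
  | S (S O), S O, S (S (S O)) => -1
  | _, _, _ => 0
  end.

(* structure constants: [X_A, X_B] = sum_E cst E A B X_E *)
Definition cst (E A B : nat) : R := -2 * eps3 A B E.

(* action of the frame field X_A on a function of z alone
   (metric coefficients do not depend on the S^3 point, E_i f = 0) *)
Definition Xd (A : nat) (f : R -> R) (z : R) : R :=
  if Nat.eqb A 0 then Derive f z else 0.

Definition gm (gd : nat -> R -> R) (A B : nat) (z : R) : R :=
  if Nat.eqb A B then gd A z else 0.

(* Koszul formula: koszul A B C = g(nabla_{X_A} X_B, X_C) *)
Definition koszul (gd : nat -> R -> R) (A B C : nat) (z : R) : R :=
  / 2 * ( Xd A (gm gd B C) z + Xd B (gm gd A C) z - Xd C (gm gd A B) z
        + sum4 (fun E => cst E A B * gm gd E C z)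
        - sum4 (fun E => cst E A C * gm gd E B z)
        - sum4 (fun E => cst E B C * gm gd E A z) ).

(* Christoffel symbols: nabla_{X_A} X_B = sum_C chris C A B X_C *)
Definition chris (gd : nat -> R -> R) (C A B : nat) (z : R) : R :=
  koszul gd A B C z / gd C z.

(* Ricci tensor Ric(X_B, X_D) = trace (X |-> R(X, X_B) X_D),
   R(X,Y) = nabla_X nabla_Y - nabla_Y nabla_X - nabla_[X,Y] *)
Definition ricci (gd : nat -> R -> R) (B D : nat) (z : R) : R :=
  sum4 (fun A =>
      Xd A (chris gd A B D) z - Xd B (chris gd A A D) z
    + sum4 (fun E => chris gd E B D z * chris gd A A E z
                     - chris gd E A D z * chris gd A B E z)
    - sum4 (fun E => cst E A B * chris gd A E D z)).

Definition ansatz (phi a b c : R -> R -> R) (t : R) : nat -> R -> R :=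
  fun A z => match A return R with
             | O => (phi z t) ^ 2
             | S O => (a z t) ^ 2
             | S (S O) => (b z t) ^ 2
             | _ => (c z t) ^ 2
             end.

Definition pz (f : R -> R -> R) : R -> R -> R :=
  fun z t => Derive (fun x => f x t) z.
Definition pt (f : R -> R -> R) : R -> R -> R :=
  fun z t => Derive (fun s => f z s) t.

Fixpoint iterD (w : list bool) (f : R -> R -> R) : R -> R -> R :=
  match w with
  | nil => f
  | cons true w' => pz (iterD w' f)
  | cons false w' => pt (iterD w' f)
  end.

Definition smooth_on (D : R -> R -> Prop) (f : R -> R -> R) : Prop :=
  forall (w : list bool) (z t : R), D z t ->
    ex_derive (fun x => iterD w f x t) z /\
    ex_derive (fun s => iterD w f z s) t /\
    continuous (fun p : R * R => iterD w f (fst p) (snd p)) (z, t).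

Definition ricci_flow_sol (phi a b c : R -> R -> R) (T : Rbar) : Prop :=
  (exists eps : R, 0 < eps /\
     forall f, (f = phi \/ f = a \/ f = b \/ f = c) ->
       smooth_on (fun z t => - eps < t /\ Rbar_lt (Finite t) T) f) /\
  (forall z t, 0 <= t -> Rbar_lt (Finite t) T ->
     phi (z + 2 * PI) t = phi z t /\ a (z + 2 * PI) t = a z t /\
     b (z + 2 * PI) t = b z t /\ c (z + 2 * PI) t = c z t) /\
  (forall z t, 0 <= t -> Rbar_lt (Finite t) T ->
     0 < phi z t /\ 0 < a z t /\ 0 < b z t /\ 0 < c z t) /\
  (forall z t, 0 <= t -> Rbar_lt (Finite t) T ->
     forall A B : nat, (A < 4)%nat -> (B < 4)%nat ->
       Derive (fun s => gm (ansatz phi a b c s) A B z) t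
       = -2 * ricci (ansatz phi a b c t) A B z).

(* Main.v *)
Require Import Defs.
From Stdlib Require Import Reals Lra Lia Psatz ZArith Rtopology Classical ClassicalEpsilon FunctionalExtensionality.
From Coquelicot Require Import Coquelicot.
Open Scope R_scope.


Definition dG2 (phi a b c : R -> R -> R) (t : R) (i : nat) (z : R) : R :=
  match i with
  | O => 2 * phi z t * pz phi z t
  | S O => 2 * a z t * pz a z t
  | S (S O) => 2 * b z t * pz b z t
  | _ => 2 * c z t * pz c z t
  end.

Local Open Scope bool_scope.
Definition Gam (phi a b c : R -> R -> R) (t : R) (C A B : nat) (z : R) : R :=
  if (C <? 4)%nat && (A <? 4)%nat && (B <? 4)%nat then
   ( / 2 * ((if (A =? 0)%nat && (B =? C)%nat then dG2 phi a b c t B z else 0)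
          + (if (B =? 0)%nat && (A =? C)%nat then dG2 phi a b c t A z else 0)
          - (if (C =? 0)%nat && (A =? B)%nat then dG2 phi a b c t A z else 0))
     - eps3 A B C * (ansatz phi a b c t B z + ansatz phi a b c t C z - ansatz phi a b c t A z))
     / ansatz phi a b c t C z
  else chris (ansatz phi a b c t) C A B z.

Local Open Scope R_scope.
Lemma Dsq (f : R -> R) z : ex_derive f z ->
  Derive (fun x => f x * (f x * 1)) z = 2 * f z * Derive f z.
Proof.
  intros H. apply is_derive_unique. auto_derive; auto. change (Derive (fun x => f x) z) with (Derive f z). change (@eq R (1 * Derive f z * (f z * 1) + f z * (1 * Derive f z * 1)) (2 * f z * Derive f z)). ring.
Qed.

Lemma chris_Gam (phi a b c : R -> R -> R) (t : R) :
  (forall z, ex_derive (fun x => phi x t) z /\ ex_derive (fun x => a x t) z /\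
             ex_derive (fun x => b x t) z /\ ex_derive (fun x => c x t) z) ->
  (forall z, 0 < phi z t /\ 0 < a z t /\ 0 < b z t /\ 0 < c z t) ->
  chris (ansatz phi a b c t) = Gam phi a b c t.
Proof.
  intros Hd Hp.
  apply functional_extensionality; intro C.
  apply functional_extensionality; intro A.
  apply functional_extensionality; intro B.
  apply functional_extensionality; intro z.
  destruct (Hd z) as (H0 & H1 & H2 & H3). destruct (Hp z) as (P0 & P1 & P2 & P3).
  destruct C as [|[|[|[|C]]]]; destruct A as [|[|[|[|A]]]]; destruct B as [|[|[|[|B]]]];
  try reflexivity;
  cbv beta iota zeta delta [Gam chris koszul Xd gm cst sum4 dG2 pz eps3 ansatz Nat.eqb Nat.ltb Nat.leb andb pow];
  rewrite ?Derive_const, ?Dsq by assumption; field; repeat split; intro HH; nra.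
Qed.


Definition pzz (f : R -> R -> R) := pz (pz f).

Definition RicF (p f g h : R -> R -> R) (t z : R) : R :=
  - f z t * pzz f z t / p z t ^ 2 + f z t * pz f z t * pz p z t / p z t ^ 3
  - f z t * pz f z t * (pz g z t / g z t + pz h z t / h z t) / p z t ^ 2
  + 2 * (f z t ^ 4 - (g z t ^ 2 - h z t ^ 2) ^ 2) / (g z t ^ 2 * h z t ^ 2).

Ltac smooth_hyps Hd Hp z :=
  let H := fresh in
  destruct (Hd z) as (H & ? & ? & ? & ? & ? & ?);
  destruct (Hp z) as (? & ? & ? & ?).

Section Ric.
Variables (phi a b c : R -> R -> R) (t : R).
Hypothesis Hd : forall z, ex_derive (fun x => phi x t) z /\ ex_derive (fun x => a x t) z /\ ex_derive (fun x => b x t) z /\ ex_derive (fun x => c x t) z /\ ex_derive (fun x => pz a x t) z /\ ex_derive (fun x => pz b x t) z /\ ex_derive (fun x => pz c x t) z.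
Hypothesis Hp : forall z, 0 < phi z t /\ 0 < a z t /\ 0 < b z t /\ 0 < c z t.

Lemma chris_G : chris (ansatz phi a b c t) = Gam phi a b c t.
Proof.
  apply chris_Gam; auto. intro z; destruct (Hd z) as (?&?&?&?&?); tauto.
Qed.

Ltac dgam z :=
  destruct (Hd z) as (?&?&?&?&?&?&?); destruct (Hp z) as (?&?&?&?);
  apply is_derive_unique;
  cbv beta iota zeta delta [Gam dG2 eps3 ansatz Nat.eqb Nat.ltb Nat.leb andb pow];
  auto_derive; [repeat split; auto; intro HH; nra|];
  unfold pzz, pz; field; intro HH; nra.

Lemma DG1 z : Derive (Gam phi a b c t 0 1 1) z =
  - (pz a z t ^ 2 + a z t * pzz a z t) / phi z t ^ 2 + 2 * a z t * pz a z t * pz phi z t / phi z t ^ 3.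
Proof. dgam z. Qed.
Lemma DG2 z : Derive (Gam phi a b c t 0 2 2) z =
  - (pz b z t ^ 2 + b z t * pzz b z t) / phi z t ^ 2 + 2 * b z t * pz b z t * pz phi z t / phi z t ^ 3.
Proof. dgam z. Qed.
Lemma DG3 z : Derive (Gam phi a b c t 0 3 3) z =
  - (pz c z t ^ 2 + c z t * pzz c z t) / phi z t ^ 2 + 2 * c z t * pz c z t * pz phi z t / phi z t ^ 3.
Proof. dgam z. Qed.

Ltac ric z :=
  unfold ricci, sum4, Xd; cbv beta iota zeta delta [Nat.eqb];
  rewrite chris_G, ?Derive_const, ?DG1, ?DG2, ?DG3;
  destruct (Hp z) as (?&?&?&?);
  cbv beta iota zeta delta [Gam dG2 eps3 ansatz Nat.eqb Nat.ltb Nat.leb andb pow cst RicF];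
  unfold pzz, pz; field; repeat split; intro HH; nra.

Lemma Ric1 z : ricci (ansatz phi a b c t) 1 1 z = RicF phi a b c t z.
Proof. ric z. Qed.
Lemma Ric2 z : ricci (ansatz phi a b c t) 2 2 z = RicF phi b a c t z.
Proof. ric z. Qed.
Lemma Ric3 z : ricci (ansatz phi a b c t) 3 3 z = RicF phi c a b t z.
Proof. ric z. Qed.
End Ric.

Lemma max_deriv (G G' : R -> R) (x D : R) :
  (forall y, is_derive G y (G' y)) -> is_derive G' x D ->
  (forall y, G y <= G x) -> G' x = 0 /\ D <= 0.
Proof.
  intros HG HG' Hmax.
  assert (H0 : G' x = 0).
  { assert (Hl : derivable_pt_lim G x (G' x)) by (apply is_derive_Reals; auto).
    set (pr := exist (fun l => derivable_pt_abs G x l) (G' x) Hl : derivable_pt G x).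
    assert (E : derive_pt G x pr = G' x) by reflexivity.
    rewrite <- E. apply (deriv_maximum G (x - 1) (x + 1) x pr); try lra.
    intros; apply Hmax. }
  split; auto.
  destruct (Rle_or_lt D 0) as [|HD]; auto. exfalso.
  apply is_derive_Reals in HG'.
  destruct (HG' (D / 2)) as [delta Hdelta]; [lra|].
  set (h := delta / 2).
  assert (Hh : 0 < h) by (unfold h; destruct delta; simpl; lra).
  assert (Hpos : forall h', 0 < h' <= h -> 0 < G' (x + h')).
  { intros h' Hh'. assert (Hneq : h' <> 0) by lra.
    assert (Hab : Rabs h' < delta) by (rewrite Rabs_right by lra; unfold h in Hh'; destruct delta; simpl in *; lra).
    specialize (Hdelta h' Hneq Hab). rewrite H0 in Hdelta.
    apply Rabs_def2 in Hdelta. destruct Hdelta as [Hd1 Hd2].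
    assert (G' (x + h') / h' > 0) by lra.
    replace (G' (x+h')) with ((G' (x + h') - 0) / h' * h') by (field; lra).
    apply Rmult_lt_0_compat; lra. }
  destruct (MVT_cor2 G G' x (x + h)) as [c0 [Hc1 Hc2]]; [lra| |].
  { intros; apply is_derive_Reals; auto. }
  assert (0 < G' c0).
  { replace c0 with (x + (c0 - x)) by ring. apply Hpos. lra. }
  specialize (Hmax (x + h)). nra.
Qed.

Lemma left_deriv (H : R -> R) (tb D r : R) :
  is_derive H tb D -> 0 < r -> (forall s, tb - r < s < tb -> H s <= H tb) -> 0 <= D.
Proof.
  intros HD Hr Hle.
  destruct (Rle_or_lt 0 D) as [|HD0]; auto. exfalso.
  apply is_derive_Reals in HD.
  destruct (HD (- D / 2)) as [delta Hdelta]; [lra|].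
  set (h := - Rmin delta r / 2).
  assert (Hm : 0 < Rmin delta r) by (apply Rmin_pos; [destruct delta; simpl; lra| lra]).
  assert (Hm1 : Rmin delta r <= delta) by apply Rmin_l.
  assert (Hm2 : Rmin delta r <= r) by apply Rmin_r.
  assert (Hneq : h <> 0) by (unfold h; lra).
  assert (Hab : Rabs h < delta) by (rewrite Rabs_left by (unfold h; lra); unfold h; lra).
  specialize (Hdelta h Hneq Hab).
  apply Rabs_def2 in Hdelta. destruct Hdelta as [Hd1 Hd2].
  assert (Hq : (H (tb + h) - H tb) / h < D / 2) by lra.
  assert (Hs : H (tb + h) <= H tb) by (apply Hle; unfold h; lra).
  assert (Hh0 : h < 0) by (unfold h; lra).
  assert (0 <= (H (tb + h) - H tb) / h).
  { unfold Rdiv. replace ((H (tb + h) - H tb) * / h) with ((H tb - H (tb + h)) * / (- h)) by (field; lra).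
    apply Rmult_le_pos; [lra| apply Rlt_le, Rinv_0_lt_compat; lra]. }
  lra.
Qed.

Lemma per_nat (f : R -> R) (P : R) : (forall z, f (z + P) = f z) ->
  forall (n : nat) z, f (z + P * INR n) = f z.
Proof.
  intros Hp n. induction n as [|n IH]; intro z.
  - simpl. rewrite Rmult_0_r, Rplus_0_r. reflexivity.
  - rewrite S_INR. replace (z + P * (INR n + 1)) with ((z + P * INR n) + P) by ring.
    rewrite Hp. apply IH.
Qed.

Lemma per_red (f : R -> R) : (forall z, f (z + 2 * PI) = f z) ->
  forall z, exists z', 0 <= z' <= 2 * PI /\ f z' = f z.
Proof.
  intros Hp z.
  assert (HP : 0 < 2 * PI) by (pose proof PI_RGT_0; lra).
  destruct (archimed (z / (2 * PI))) as [H1 H2].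
  set (n := (up (z / (2 * PI)) - 1)%Z).
  exists (z - 2 * PI * IZR n).
  assert (En : IZR n = IZR (up (z / (2 * PI))) - 1) by (unfold n; rewrite minus_IZR; reflexivity).
  split.
  - rewrite En.
    assert (z / (2 * PI) * (2 * PI) = z) by (field; lra).
    split; nra.
  - destruct (Z_le_gt_dec 0 n) as [Hn|Hn].
    + rewrite <- (Z2Nat.id n Hn). rewrite <- INR_IZR_INZ.
      rewrite <- (per_nat f (2 * PI) Hp (Z.to_nat n) (z - 2 * PI * INR (Z.to_nat n))).
      f_equal; ring.
    + assert (Hn' : (0 <= - n)%Z) by lia.
      replace (IZR n) with (- IZR (- n)) by (rewrite opp_IZR; ring).
      rewrite <- (Z2Nat.id (- n) Hn'). rewrite <- INR_IZR_INZ.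
      rewrite <- (per_nat f (2 * PI) Hp (Z.to_nat (- n)) z).
      f_equal; ring.
Qed.

Lemma cont2_elim (F : R -> R -> R) z t :
  continuous (fun p : R * R => F (fst p) (snd p)) (z, t) ->
  forall eps, 0 < eps -> exists d, 0 < d /\
    forall u v, Rabs (u - z) < d -> Rabs (v - t) < d -> Rabs (F u v - F z t) < eps.
Proof.
  intros Hc eps He.
  assert (Hl := proj1 (filterlim_locally _ _) Hc (mkposreal eps He)).
  apply (locally_2d_locally (fun u v => ball (F z t) eps (F u v)) z t) in Hl.
  destruct Hl as [d Hd]. exists d. split; [destruct d; simpl; lra|].
  intros u v Hu Hv. specialize (Hd u v Hu Hv). exact Hd.
Qed.

Lemma contact (F : R -> R -> R) (T' : R) :
  (forall z t, 0 <= t <= T' -> continuous (fun p : R * R => F (fst p) (snd p)) (z, t)) ->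
  (forall z t, 0 <= t <= T' -> F (z + 2 * PI) t = F z t) ->
  (forall z, F z 0 < 0) ->
  forall z1 t1, 0 <= t1 <= T' -> 0 <= F z1 t1 ->
  exists zb tb, 0 < tb <= T' /\ F zb tb = 0 /\
    (forall z t, 0 <= t < tb -> F z t < 0) /\ (forall z, F z tb <= 0).
Proof.
  intros Hc Hper Hinit z1 t1 Ht1 Hbad.
  set (U := fun s => 0 <= s <= t1 /\ forall t z, 0 <= t <= s -> F z t < 0).
  assert (HUb : bound U) by (exists t1; intros s [Hs _]; lra).
  assert (HU0 : U 0).
  { split; [lra|]. intros t z Ht. replace t with 0 by lra. apply Hinit. }
  destruct (completeness U HUb (ex_intro _ 0 HU0)) as [tb [Hub Hlub]].
  assert (Htb0 : 0 <= tb) by (apply Hub; auto).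
  assert (Htb1 : tb <= t1) by (apply Hlub; intros s [Hs _]; lra).
  assert (HA : forall t z, 0 <= t < tb -> F z t < 0).
  { intros t z Ht.
    destruct (classic (exists s, U s /\ t < s)) as [[s [[Hs1 Hs2] Hts]]|Hn].
    - apply Hs2; lra.
    - exfalso. assert (tb <= t); [|lra].
      apply Hlub. intros s Hs. destruct (Rle_or_lt s t); auto.
      exfalso; apply Hn; eauto. }
  assert (Hred : forall z t, 0 <= t <= T' -> exists z', 0 <= z' <= 2 * PI /\ F z' t = F z t).
  { intros z t Ht. apply (per_red (fun z => F z t)). intros; apply Hper; auto. }
  assert (HB : forall n : nat, exists p : R * R,
     tb <= snd p <= tb + / INR (S n) /\ 0 <= fst p <= 2 * PI /\ snd p <= t1 /\ 0 <= F (fst p) (snd p)).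
  { intro n.
    assert (Hn : 0 < / INR (S n)) by (apply Rinv_0_lt_compat, lt_0_INR; lia).
    destruct (Rle_or_lt t1 tb) as [Heq|Hlt].
    - destruct (Hred z1 t1) as [z' [Hz' Ez']]; [lra|].
      exists (z', t1); cbn [fst snd]. repeat split; try lra; rewrite Ez'; auto.
    - set (s := Rmin (tb + / INR (S n)) t1).
      assert (Hs1 : tb < s) by (unfold s; apply Rmin_glb_lt; lra).
      assert (Hs2 : s <= t1) by apply Rmin_r.
      assert (Hs3 : s <= tb + / INR (S n)) by apply Rmin_l.
      assert (HnU : ~ U s) by (intro HU; specialize (Hub s HU); lra).
      assert (exists t z, 0 <= t <= s /\ 0 <= F z t).
      { apply NNPP; intro Hc'. apply HnU. split; [lra|].
        intros t z Ht. apply Rnot_le_lt. intro. apply Hc'. eauto. }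
      destruct H as [t [z [Ht Hf]]].
      assert (tb <= t).
      { destruct (Rle_or_lt tb t); auto. specialize (HA t z). lra. }
      destruct (Hred z t) as [z' [Hz' Ez']]; [lra|].
      exists (z', t); cbn [fst snd]. repeat split; try lra; rewrite Ez'; auto. }
  set (seq := fun n => proj1_sig (constructive_indefinite_description _ (HB n))).
  assert (Hseq : forall n, tb <= snd (seq n) <= tb + / INR (S n) /\ 0 <= fst (seq n) <= 2 * PI
                   /\ snd (seq n) <= t1 /\ 0 <= F (fst (seq n)) (snd (seq n))).
  { intro n. unfold seq. destruct (constructive_indefinite_description _ (HB n)); simpl; auto. }
  destruct (Bolzano_Weierstrass (fun n => fst (seq n)) (fun c => 0 <= c <= 2 * PI) (compact_P3 0 (2 * PI)))
    as [zb Hzb].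
  { intro n. apply Hseq. }
  assert (HC : 0 <= F zb tb).
  { apply Rnot_lt_le. intro Hneg.
    destruct (cont2_elim F zb tb (Hc zb tb ltac:(lra)) (- F zb tb)) as [d [Hd Hdd]]; [lra|].
    destruct (archimed (/ d)) as [Ha1 _].
    assert (Hup : (0 < up (/ d))%Z).
    { apply lt_IZR. assert (0 < / d) by (apply Rinv_0_lt_compat; lra). simpl; lra. }
    set (N := Z.to_nat (up (/ d))).
    assert (HN : / d < INR N).
    { unfold N. rewrite INR_IZR_INZ, Z2Nat.id by lia. lra. }
    assert (Hnb : neighbourhood (fun y => Rabs (y - zb) < d) zb).
    { exists (mkposreal d Hd). intros y Hy. unfold disc in Hy. simpl in Hy. exact Hy. }
    destruct (Hzb _ N Hnb) as [p [Hp Hpz]].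
    destruct (Hseq p) as [Hp1 [Hp2 [Hp3 Hp4]]].
    assert (Hinv : / INR (S p) < d).
    { assert (INR N <= INR p) by (apply le_INR; lia).
      rewrite S_INR.
      assert (0 < / d) by (apply Rinv_0_lt_compat; lra).
      apply (Rmult_lt_reg_l (INR p + 1)); [lra|].
      rewrite Rinv_r by lra.
      apply (Rmult_lt_reg_l (/ d)); [auto|].
      replace (/ d * ((INR p + 1) * d)) with (INR p + 1) by (field; lra). lra. }
    assert (Ht : Rabs (snd (seq p) - tb) < d) by (rewrite Rabs_right; lra).
    specialize (Hdd _ _ Hpz Ht). apply Rabs_def2 in Hdd. lra. }
  assert (HD : 0 < tb).
  { destruct (Rle_lt_or_eq_dec 0 tb Htb0) as [|E]; auto. rewrite <- E in HC. specialize (Hinit zb). lra. }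
  assert (HE : forall z, F z tb <= 0).
  { intro z. apply Rnot_lt_le. intro Hpos.
    destruct (cont2_elim F z tb (Hc z tb ltac:(lra)) (F z tb)) as [d [Hd Hdd]]; [lra|].
    set (t := tb - Rmin d tb / 2).
    assert (0 < Rmin d tb) by (apply Rmin_pos; lra).
    assert (Rmin d tb <= d) by apply Rmin_l.
    assert (Rmin d tb <= tb) by apply Rmin_r.
    assert (Ht : Rabs (t - tb) < d) by (unfold t; rewrite Rabs_left; lra).
    assert (Hz : Rabs (z - z) < d) by (rewrite Rminus_diag, Rabs_R0; lra).
    specialize (Hdd z t Hz Ht). apply Rabs_def2 in Hdd.
    specialize (HA t z). unfold t in *. lra. }
  exists zb, tb. split; [lra|]. split.
  - specialize (HE zb); lra.
  - split; auto.
Qed.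

Definition RicA (p pp f fz fzz g gz h hz : R) : R :=
  - f * fzz / p ^ 2 + f * fz * pp / p ^ 3
  - f * fz * (gz / g + hz / h) / p ^ 2
  + 2 * (f ^ 4 - (g ^ 2 - h ^ 2) ^ 2) / (g ^ 2 * h ^ 2).

Lemma RicA_sym p pp f fz fzz g gz h hz : 0 < p -> 0 < g -> 0 < h ->
  RicA p pp f fz fzz g gz h hz = RicA p pp f fz fzz h hz g gz.
Proof. intros; unfold RicA; field; repeat split; intro HH; nra. Qed.

Lemma ident (p pp c cz czz x xz xzz w wz : R) :
  0 < p -> 0 < c -> 0 < x -> 0 < w ->
  - RicA p pp c cz czz x xz w wz / c ^ 2 + RicA p pp x xz xzz w wz c cz / x ^ 2
  = (czz / c - (cz / c) ^ 2 - xzz / x + (xz / x) ^ 2) / p ^ 2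
    + (cz / c - xz / x) * (cz / c + xz / x + wz / w - pp / p) / p ^ 2
    + 4 * (x ^ 2 - c ^ 2) * (x ^ 2 + c ^ 2 - w ^ 2) / (x ^ 2 * w ^ 2 * c ^ 2).
Proof. intros; unfold RicA; field; repeat split; intro HH; nra. Qed.

Lemma alg_core (p pp c cz czz x xz xzz w wz ct xt : R) :
  0 < p -> 0 < c -> 0 < x -> 0 < w ->
  ct = - RicA p pp c cz czz x xz w wz / c ->
  xt = - RicA p pp x xz xzz w wz c cz / x ->
  cz / c - xz / x = 0 ->
  ct / c - xt / x = (czz / c - (cz / c) ^ 2 - xzz / x + (xz / x) ^ 2) / p ^ 2
    + 4 * (x ^ 2 - c ^ 2) * (x ^ 2 + c ^ 2 - w ^ 2) / (x ^ 2 * w ^ 2 * c ^ 2).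
Proof.
  intros Hp Hc Hx Hw Hct Hxt H1.
  assert (E : ct / c - xt / x = - RicA p pp c cz czz x xz w wz / c ^ 2 + RicA p pp x xz xzz w wz c cz / x ^ 2)
    by (rewrite Hct, Hxt; field; lra).
  rewrite E, ident by auto. rewrite H1. field; repeat split; intro HH; nra.
Qed.

Lemma alg_lower (p pp c cz czz x xz xzz w wz ct xt eps : R) :
  0 < p -> 0 < c -> 0 < x -> 0 < w -> c < x -> w <= x -> 0 < eps ->
  ct = - RicA p pp c cz czz x xz w wz / c ->
  xt = - RicA p pp x xz xzz w wz c cz / x ->
  cz / c - xz / x = 0 ->
  0 <= czz / c - (cz / c) ^ 2 - xzz / x + (xz / x) ^ 2 ->
  0 <= - (ct / c - xt / x) - eps -> False.
Proof.
  intros Hp Hc Hx Hw Hcx Hwx He Hct Hxt H1 H2 H3.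
  rewrite (alg_core p pp c cz czz x xz xzz w wz ct xt) in H3 by auto.
  assert (0 <= (czz / c - (cz / c) ^ 2 - xzz / x + (xz / x) ^ 2) / p ^ 2)
    by (unfold Rdiv; apply Rmult_le_pos; [auto| apply Rlt_le, Rinv_0_lt_compat, pow_lt; auto]).
  assert (0 < 4 * (x ^ 2 - c ^ 2) * (x ^ 2 + c ^ 2 - w ^ 2) / (x ^ 2 * w ^ 2 * c ^ 2)).
  { apply Rdiv_lt_0_compat; [|apply Rmult_lt_0_compat; [apply Rmult_lt_0_compat|]; apply pow_lt; auto].
    apply Rmult_lt_0_compat; [apply Rmult_lt_0_compat; nra| nra]. }
  lra.
Qed.

Lemma alg_upper (p pp c cz czz x xz xzz w wz ct xt eps : R) :
  0 < p -> 0 < c -> 0 < x -> 0 < w -> x < c -> w <= c -> 0 < eps ->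
  ct = - RicA p pp c cz czz x xz w wz / c ->
  xt = - RicA p pp x xz xzz w wz c cz / x ->
  cz / c - xz / x = 0 ->
  czz / c - (cz / c) ^ 2 - xzz / x + (xz / x) ^ 2 <= 0 ->
  0 <= (ct / c - xt / x) - eps -> False.
Proof.
  intros Hp Hc Hx Hw Hcx Hwx He Hct Hxt H1 H2 H3.
  rewrite (alg_core p pp c cz czz x xz xzz w wz ct xt) in H3 by auto.
  assert ((czz / c - (cz / c) ^ 2 - xzz / x + (xz / x) ^ 2) / p ^ 2 <= 0).
  { unfold Rdiv. assert (0 < / p ^ 2) by (apply Rinv_0_lt_compat, pow_lt; auto). nra. }
  assert (0 < 4 * (c ^ 2 - x ^ 2) * (x ^ 2 + c ^ 2 - w ^ 2) / (x ^ 2 * w ^ 2 * c ^ 2)).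
  { apply Rdiv_lt_0_compat; [|apply Rmult_lt_0_compat; [apply Rmult_lt_0_compat|]; apply pow_lt; auto].
    apply Rmult_lt_0_compat; [apply Rmult_lt_0_compat; nra| nra]. }
  assert (4 * (x ^ 2 - c ^ 2) * (x ^ 2 + c ^ 2 - w ^ 2) / (x ^ 2 * w ^ 2 * c ^ 2) =
          - (4 * (c ^ 2 - x ^ 2) * (x ^ 2 + c ^ 2 - w ^ 2) / (x ^ 2 * w ^ 2 * c ^ 2))) by (field; repeat split; nra).
  lra.
Qed.

Lemma dlog_time (u v : R -> R -> R) x s k ep :
  ex_derive (fun r => u x r) s -> ex_derive (fun r => v x r) s -> 0 < u x s -> 0 < v x s ->
  is_derive (fun r => k * (ln (u x r) - ln (v x r)) - ep * (1 + r)) s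
    (k * (Derive (fun r => u x r) s / u x s - Derive (fun r => v x r) s / v x s) - ep).
Proof.
  intros H1 H2 H3 H4. auto_derive; [repeat split; auto|]. field. split; lra.
Qed.

Lemma dlog_space (u v : R -> R -> R) s k y :
  ex_derive (fun z => u z s) y -> ex_derive (fun z => v z s) y -> 0 < u y s -> 0 < v y s ->
  is_derive (fun z => k * (ln (u z s) - ln (v z s))) y
    (k * (pz u y s / u y s - pz v y s / v y s)).
Proof.
  intros H1 H2 H3 H4. auto_derive; [repeat split; auto|]. unfold pz. field. split; lra.
Qed.

Lemma dlog_space2 (u v : R -> R -> R) s k y :
  ex_derive (fun z => u z s) y -> ex_derive (fun z => v z s) y ->
  ex_derive (fun z => pz u z s) y -> ex_derive (fun z => pz v z s) y ->
  0 < u y s -> 0 < v y s ->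
  is_derive (fun z => k * (pz u z s / u z s - pz v z s / v z s)) y
    (k * (pzz u y s / u y s - (pz u y s / u y s) ^ 2 - pzz v y s / v y s + (pz v y s / v y s) ^ 2)).
Proof.
  intros H1 H2 H3 H4 H5 H6. auto_derive; [repeat split; auto; lra|]. unfold pzz, pz. field. split; lra.
Qed.

Lemma time_sq (f : R -> R -> R) x s :
  ex_derive (fun r => f x r) s ->
  Derive (fun r => f x r ^ 2) s = 2 * f x s * Derive (fun r => f x r) s.
Proof.
  intros H. apply is_derive_unique. auto_derive; auto. ring.
Qed.

Lemma RicF_A p f g h t z :
  RicF p f g h t z = RicA (p z t) (pz p z t) (f z t) (pz f z t) (pzz f z t) (g z t) (pz g z t) (h z t) (pz h z t).
Proof. reflexivity. Qed.

Section Cont.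
Local Notation cont f p := (continuous (fun q : R * R => f q) p).
Lemma cR_plus (f g : R * R -> R) p : cont f p -> cont g p -> cont (fun q => f q + g q) p.
Proof. intros; exact (continuous_plus f g p H H0). Qed.
Lemma cR_opp (f : R * R -> R) p : cont f p -> cont (fun q => - f q) p.
Proof. intros; exact (continuous_opp f p H). Qed.
Lemma cR_mult (f g : R * R -> R) p : cont f p -> cont g p -> cont (fun q => f q * g q) p.
Proof. intros; exact (continuous_mult f g p H H0). Qed.
Lemma cR_minus (f g : R * R -> R) p : cont f p -> cont g p -> cont (fun q => f q - g q) p.
Proof. intros. apply cR_plus; auto. apply cR_opp; auto. Qed.
Lemma cR_const (k : R) p : cont (fun _ => k) p.
Proof. apply continuous_const. Qed.
Lemma cR_snd p : cont (fun q => snd q) p.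
Proof. destruct p. apply continuous_snd. Qed.
Lemma cR_ln (f : R * R -> R) p : cont f p -> 0 < f p -> cont (fun q => ln (f q)) p.
Proof. intros. apply (continuous_comp f ln p); auto. apply continuous_ln; auto. Qed.
Lemma cR_abs (f : R * R -> R) p : cont f p -> cont (fun q => Rabs (f q)) p.
Proof. intros. apply (continuous_comp f Rabs p); auto. apply continuous_Rabs. Qed.
Lemma cR_max (f g : R * R -> R) p : cont f p -> cont g p -> cont (fun q => Rmax (f q) (g q)) p.
Proof.
  intros Hf Hg.
  apply (continuous_ext (fun q => (f q + g q + Rabs (f q - g q)) * / 2)).
  - intro q. change ((f q + g q + Rabs (f q - g q)) * / 2 = Rmax (f q) (g q)). unfold Rmax. destruct (Rle_dec (f q) (g q)).
    + rewrite Rabs_left1 by lra. field.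
    + rewrite Rabs_right by lra. field.
  - apply cR_mult; [|apply cR_const]. apply cR_plus; [apply cR_plus; auto|]. apply cR_abs, cR_minus; auto.
Qed.
End Cont.

Section Main.
Variables (phi a b c : R -> R -> R) (T : Rbar) (t : R).
Hypothesis Ht0 : 0 <= t.
Hypothesis HtT : Rbar_lt (Finite t) T.
Hypothesis Hsol : ricci_flow_sol phi a b c T.

Lemma dom s : 0 <= s <= t -> Rbar_lt (Finite s) T.
Proof. intros Hs. apply (Rbar_le_lt_trans _ (Finite t)); auto. simpl; lra. Qed.

Lemma HS f : f = phi \/ f = a \/ f = b \/ f = c -> forall s x, 0 <= s <= t ->
  ex_derive (fun y => f y s) x /\ ex_derive (fun y => pz f y s) x /\
  ex_derive (fun r => f x r) s /\ continuous (fun p : R * R => f (fst p) (snd p)) (x, s).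
Proof.
  intros Hf s x Hs.
  destruct Hsol as [[e0 [He0 Hsm]] _].
  pose proof (Hsm f Hf) as Hs'.
  assert (HD : - e0 < s /\ Rbar_lt (Finite s) T) by (split; [lra| apply dom; auto]).
  destruct (Hs' nil x s HD) as [A1 [A2 A3]].
  destruct (Hs' (cons true nil) x s HD) as [B1 _].
  simpl in *. auto.
Qed.

Lemma pos s x : 0 <= s <= t -> 0 < phi x s /\ 0 < a x s /\ 0 < b x s /\ 0 < c x s.
Proof.
  intros Hs. destruct Hsol as [_ [_ [Hp _]]]. apply Hp; [lra| apply dom; auto].
Qed.

Lemma per s x : 0 <= s <= t ->
  a (x + 2 * PI) s = a x s /\ b (x + 2 * PI) s = b x s /\ c (x + 2 * PI) s = c x s.
Proof.
  intros Hs. destruct Hsol as [_ [Hp _]]. destruct (Hp x s) as (_ & ? & ? & ?); [lra| apply dom; auto|].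
  auto.
Qed.

Lemma Hd_at s : 0 <= s <= t -> forall z, ex_derive (fun x => phi x s) z /\ ex_derive (fun x => a x s) z /\
  ex_derive (fun x => b x s) z /\ ex_derive (fun x => c x s) z /\
  ex_derive (fun x => pz a x s) z /\ ex_derive (fun x => pz b x s) z /\ ex_derive (fun x => pz c x s) z.
Proof.
  intros Hs z.
  destruct (HS phi ltac:(auto) s z Hs) as (?&?&?&?).
  destruct (HS a ltac:(auto) s z Hs) as (?&?&?&?).
  destruct (HS b ltac:(auto) s z Hs) as (?&?&?&?).
  destruct (HS c ltac:(auto) s z Hs) as (?&?&?&?).
  tauto.
Qed.

Lemma Hp_at s : 0 <= s <= t -> forall z, 0 < phi z s /\ 0 < a z s /\ 0 < b z s /\ 0 < c z s.
Proof. intros; apply pos; auto. Qed.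

Ltac flow_tac i Ric f x s Hs :=
  destruct Hsol as [_ [_ [_ Hfl]]];
  let H := fresh in
  pose proof (Hfl x s ltac:(lra) (dom s Hs) i i ltac:(lia) ltac:(lia)) as H;
  change (Derive (fun r => f x r ^ 2) s = -2 * ricci (ansatz phi a b c s) i i x) in H;
  rewrite time_sq in H by (apply (HS f); auto);
  rewrite (Ric phi a b c s (Hd_at s Hs) (Hp_at s Hs)), RicF_A in H;
  destruct (pos s x Hs) as (?&?&?&?);
  match goal with |- ?D = _ =>
    replace D with ((2 * f x s * D) / (2 * f x s)) by (field; lra) end;
  rewrite H; field; lra.

Lemma flow_c s x : 0 <= s <= t -> Derive (fun r => c x r) s =
  - RicA (phi x s) (pz phi x s) (c x s) (pz c x s) (pzz c x s) (a x s) (pz a x s) (b x s) (pz b x s) / c x s.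
Proof. intros Hs. flow_tac 3%nat Ric3 c x s Hs. Qed.
Lemma flow_b s x : 0 <= s <= t -> Derive (fun r => b x r) s =
  - RicA (phi x s) (pz phi x s) (b x s) (pz b x s) (pzz b x s) (a x s) (pz a x s) (c x s) (pz c x s) / b x s.
Proof. intros Hs. flow_tac 2%nat Ric2 b x s Hs. Qed.
Lemma flow_a s x : 0 <= s <= t -> Derive (fun r => a x r) s =
  - RicA (phi x s) (pz phi x s) (a x s) (pz a x s) (pzz a x s) (b x s) (pz b x s) (c x s) (pz c x s) / a x s.
Proof. intros Hs. flow_tac 1%nat Ric1 a x s Hs. Qed.


Lemma contF (F : R -> R -> R) :
  (forall z s, 0 <= s <= t -> continuous (fun p : R * R => F (fst p) (snd p)) (z, s)) ->
  (forall z s, 0 <= s <= t -> continuous (fun p : R * R => F (fst p) (snd p)) (z, s)).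
Proof. auto. Qed.

Lemma cont_lr (u v : R -> R -> R) z s :
  continuous (fun p : R * R => u (fst p) (snd p)) (z, s) ->
  continuous (fun p : R * R => v (fst p) (snd p)) (z, s) ->
  0 < u z s -> 0 < v z s ->
  continuous (fun p : R * R => - (ln (u (fst p) (snd p)) - ln (v (fst p) (snd p)))) (z, s).
Proof.
  intros. apply cR_opp, cR_minus; apply cR_ln; auto.
Qed.

Lemma lnlt x y : 0 < x -> 0 < y -> ln x < ln y -> x < y.
Proof. intros; apply ln_lt_inv; auto. Qed.
Lemma lnle x y : 0 < x -> 0 < y -> ln x <= ln y -> x <= y.
Proof.
  intros Hx Hy H. destruct (Rle_or_lt x y) as [|Hlt]; auto.
  pose proof (ln_increasing y x Hy Hlt). lra.
Qed.

Lemma step1 (Hord : forall z, a z 0 <= b z 0 /\ b z 0 <= c z 0) ep : 0 < ep ->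
  forall x s, 0 <= s <= t ->
  Rmax (- (ln (c x s) - ln (a x s))) (- (ln (c x s) - ln (b x s))) - ep * (1 + s) < 0.
Proof.
  intros Hep x s Hs. apply Rnot_le_lt; intro Hbad.
  set (F := fun x s => Rmax (- (ln (c x s) - ln (a x s))) (- (ln (c x s) - ln (b x s))) - ep * (1 + s)).
  assert (Hcont : forall z s, 0 <= s <= t -> continuous (fun p : R * R => F (fst p) (snd p)) (z, s)).
  { intros z r Hr. unfold F.
    destruct (pos r z Hr) as (?&?&?&?).
    apply cR_minus; [apply cR_max|apply cR_mult; [apply cR_const| apply cR_plus; [apply cR_const|apply cR_snd]]];
    apply cont_lr; auto;
    first [apply (proj2 (proj2 (proj2 (HS a ltac:(auto) r z Hr)))) | apply (proj2 (proj2 (proj2 (HS b ltac:(auto) r z Hr)))) | apply (proj2 (proj2 (proj2 (HS c ltac:(auto) r z Hr))))]. }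
  assert (Hper : forall z s, 0 <= s <= t -> F (z + 2 * PI) s = F z s).
  { intros z r Hr. unfold F. destruct (per r z Hr) as (E1 & E2 & E3). rewrite E1, E2, E3. reflexivity. }
  assert (Hinit : forall z, F z 0 < 0).
  { intro z. unfold F. destruct (Hord z) as [H1 H2].
    destruct (pos 0 z ltac:(lra)) as (?&?&?&?).
    assert (ln (a z 0) <= ln (c z 0)) by (apply ln_le; lra).
    assert (ln (b z 0) <= ln (c z 0)) by (apply ln_le; lra).
    unfold Rmax; destruct Rle_dec; lra. }
  destruct (contact F t Hcont Hper Hinit x s Hs Hbad) as (zb & tb & [Htb1 Htb2] & HF0 & Hneg & Hle).
  assert (Htb : 0 <= tb <= t) by lra.
  destruct (pos tb zb Htb) as (P0 & Pa & Pb & Pc).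
  destruct (Hd_at tb Htb zb) as (D0 & Da & Db & Dc & Dpa & Dpb & Dpc).
  destruct (HS a ltac:(auto) tb zb Htb) as (_ & _ & Ta & _).
  destruct (HS b ltac:(auto) tb zb Htb) as (_ & _ & Tb & _).
  destruct (HS c ltac:(auto) tb zb Htb) as (_ & _ & Tc & _).
  unfold F in HF0.
  destruct (Rle_dec (- (ln (c zb tb) - ln (a zb tb))) (- (ln (c zb tb) - ln (b zb tb)))) as [Hcase|Hcase].
  - rewrite Rmax_right in HF0 by auto.
    pose proof (left_deriv _ tb _ tb (dlog_time c b zb tb (-1) ep Tc Tb Pc Pb) Htb1) as HT.
    assert (HT' : 0 <= -1 * (Derive (fun r => c zb r) tb / c zb tb - Derive (fun r => b zb r) tb / b zb tb) - ep).
    { apply HT. intros r Hr. specialize (Hneg zb r ltac:(lra)). unfold F in Hneg.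
      pose proof (Rmax_r (- (ln (c zb r) - ln (a zb r))) (- (ln (c zb r) - ln (b zb r)))). lra. }
    destruct (max_deriv (fun y => -1 * (ln (c y tb) - ln (b y tb)))
                (fun y => -1 * (pz c y tb / c y tb - pz b y tb / b y tb)) zb _
                (fun y => dlog_space c b tb (-1) y (proj1 (proj2 (proj2 (proj2 (Hd_at tb Htb y)))))
                        (proj1 (proj2 (proj2 (Hd_at tb Htb y))))
                        (proj2 (proj2 (proj2 (pos tb y Htb)))) (proj1 (proj2 (proj2 (pos tb y Htb)))))
                (dlog_space2 c b tb (-1) zb Dc Db Dpc Dpb Pc Pb)) as [HG1 HG2].
    { intro y. specialize (Hle y). unfold F in Hle.
      pose proof (Rmax_r (- (ln (c y tb) - ln (a y tb))) (- (ln (c y tb) - ln (b y tb)))). lra. }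
    apply (alg_lower (phi zb tb) (pz phi zb tb) (c zb tb) (pz c zb tb) (pzz c zb tb)
             (b zb tb) (pz b zb tb) (pzz b zb tb) (a zb tb) (pz a zb tb)
             (Derive (fun r => c zb r) tb) (Derive (fun r => b zb r) tb) ep); auto.
    + apply lnlt; auto. nra.
    + apply lnle; auto. lra.
    + rewrite (flow_c tb zb Htb). rewrite RicA_sym by auto. reflexivity.
    + apply (flow_b tb zb Htb).
    + lra.
    + lra.
    + lra.
  - rewrite Rmax_left in HF0 by lra.
    pose proof (left_deriv _ tb _ tb (dlog_time c a zb tb (-1) ep Tc Ta Pc Pa) Htb1) as HT.
    assert (HT' : 0 <= -1 * (Derive (fun r => c zb r) tb / c zb tb - Derive (fun r => a zb r) tb / a zb tb) - ep).
    { apply HT. intros r Hr. specialize (Hneg zb r ltac:(lra)). unfold F in Hneg.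
      pose proof (Rmax_l (- (ln (c zb r) - ln (a zb r))) (- (ln (c zb r) - ln (b zb r)))). lra. }
    destruct (max_deriv (fun y => -1 * (ln (c y tb) - ln (a y tb)))
                (fun y => -1 * (pz c y tb / c y tb - pz a y tb / a y tb)) zb _
                (fun y => dlog_space c a tb (-1) y (proj1 (proj2 (proj2 (proj2 (Hd_at tb Htb y)))))
                        (proj1 (proj2 (Hd_at tb Htb y)))
                        (proj2 (proj2 (proj2 (pos tb y Htb)))) (proj1 (proj2 (pos tb y Htb))))
                (dlog_space2 c a tb (-1) zb Dc Da Dpc Dpa Pc Pa)) as [HG1 HG2].
    { intro y. specialize (Hle y). unfold F in Hle.
      pose proof (Rmax_l (- (ln (c y tb) - ln (a y tb))) (- (ln (c y tb) - ln (b y tb)))). lra. }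
    apply (alg_lower (phi zb tb) (pz phi zb tb) (c zb tb) (pz c zb tb) (pzz c zb tb)
             (a zb tb) (pz a zb tb) (pzz a zb tb) (b zb tb) (pz b zb tb)
             (Derive (fun r => c zb r) tb) (Derive (fun r => a zb r) tb) ep); auto.
    + apply lnlt; auto. nra.
    + apply Rlt_le, lnlt; auto. lra.
    + apply (flow_c tb zb Htb).
    + apply (flow_a tb zb Htb).
    + lra.
    + lra.
    + lra.
Qed.


Lemma step1c (Hord : forall z, a z 0 <= b z 0 /\ b z 0 <= c z 0) x s : 0 <= s <= t ->
  a x s <= c x s /\ b x s <= c x s.
Proof.
  intros Hs. destruct (pos s x Hs) as (?&?&?&?).
  assert (Hs1 : 0 < 1 + s) by lra.
  split; apply lnle; auto; apply Rnot_lt_le; intro Hlt.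
  - set (d := ln (a x s) - ln (c x s)).
    pose proof (step1 Hord (d / (2 * (1 + s))) ltac:(apply Rdiv_lt_0_compat; unfold d; lra) x s Hs) as HH.
    pose proof (Rmax_l (- (ln (c x s) - ln (a x s))) (- (ln (c x s) - ln (b x s)))).
    replace (d / (2 * (1 + s)) * (1 + s)) with (d / 2) in HH by (field; lra).
    unfold d in *. lra.
  - set (d := ln (b x s) - ln (c x s)).
    pose proof (step1 Hord (d / (2 * (1 + s))) ltac:(apply Rdiv_lt_0_compat; unfold d; lra) x s Hs) as HH.
    pose proof (Rmax_r (- (ln (c x s) - ln (a x s))) (- (ln (c x s) - ln (b x s)))).
    replace (d / (2 * (1 + s)) * (1 + s)) with (d / 2) in HH by (field; lra).
    unfold d in *. lra.
Qed.

Lemma step2 (Hord : forall z, a z 0 <= b z 0 /\ b z 0 <= c z 0) (lambda : R)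
  (Hl : 1 <= lambda) (Hbnd : forall z, c z 0 / a z 0 <= lambda) ep : 0 < ep ->
  forall x s, 0 <= s <= t ->
  (ln (c x s) - ln (a x s)) - ln lambda - ep * (1 + s) < 0.
Proof.
  intros Hep x s Hs. apply Rnot_le_lt; intro Hbad.
  assert (HL : 0 <= ln lambda) by (rewrite <- ln_1; apply ln_le; lra).
  set (F := fun x s => (ln (c x s) - ln (a x s)) - ln lambda - ep * (1 + s)).
  assert (Hcont : forall z s, 0 <= s <= t -> continuous (fun p : R * R => F (fst p) (snd p)) (z, s)).
  { intros z r Hr. unfold F.
    destruct (pos r z Hr) as (?&?&?&?).
    apply cR_minus; [apply cR_minus; [|apply cR_const]|apply cR_mult; [apply cR_const| apply cR_plus; [apply cR_const|apply cR_snd]]].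
    apply cR_minus; apply cR_ln; auto;
    first [apply (proj2 (proj2 (proj2 (HS a ltac:(auto) r z Hr)))) | apply (proj2 (proj2 (proj2 (HS c ltac:(auto) r z Hr))))]. }
  assert (Hper : forall z s, 0 <= s <= t -> F (z + 2 * PI) s = F z s).
  { intros z r Hr. unfold F. destruct (per r z Hr) as (E1 & E2 & E3). rewrite E1, E3. reflexivity. }
  assert (Hinit : forall z, F z 0 < 0).
  { intro z. unfold F. specialize (Hbnd z).
    destruct (pos 0 z ltac:(lra)) as (?&?&?&?).
    assert (ln (c z 0 / a z 0) <= ln lambda) by (apply ln_le; auto; apply Rdiv_lt_0_compat; auto).
    rewrite ln_div in H3 by auto. lra. }
  destruct (contact F t Hcont Hper Hinit x s Hs Hbad) as (zb & tb & [Htb1 Htb2] & HF0 & Hneg & Hle).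
  assert (Htb : 0 <= tb <= t) by lra.
  destruct (pos tb zb Htb) as (P0 & Pa & Pb & Pc).
  destruct (Hd_at tb Htb zb) as (D0 & Da & Db & Dc & Dpa & Dpb & Dpc).
  destruct (HS a ltac:(auto) tb zb Htb) as (_ & _ & Ta & _).
  destruct (HS c ltac:(auto) tb zb Htb) as (_ & _ & Tc & _).
  unfold F in HF0.
  pose proof (left_deriv _ tb _ tb (dlog_time c a zb tb 1 ep Tc Ta Pc Pa) Htb1) as HT.
  assert (HT' : 0 <= 1 * (Derive (fun r => c zb r) tb / c zb tb - Derive (fun r => a zb r) tb / a zb tb) - ep).
  { apply HT. intros r Hr. specialize (Hneg zb r ltac:(lra)). unfold F in Hneg. lra. }
  destruct (max_deriv (fun y => 1 * (ln (c y tb) - ln (a y tb)))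
              (fun y => 1 * (pz c y tb / c y tb - pz a y tb / a y tb)) zb _
              (fun y => dlog_space c a tb 1 y (proj1 (proj2 (proj2 (proj2 (Hd_at tb Htb y)))))
                      (proj1 (proj2 (Hd_at tb Htb y)))
                      (proj2 (proj2 (proj2 (pos tb y Htb)))) (proj1 (proj2 (pos tb y Htb))))
              (dlog_space2 c a tb 1 zb Dc Da Dpc Dpa Pc Pa)) as [HG1 HG2].
  { intro y. specialize (Hle y). unfold F in Hle. lra. }
  destruct (step1c Hord zb tb Htb) as [_ Hbc].
  apply (alg_upper (phi zb tb) (pz phi zb tb) (c zb tb) (pz c zb tb) (pzz c zb tb)
           (a zb tb) (pz a zb tb) (pzz a zb tb) (b zb tb) (pz b zb tb)
           (Derive (fun r => c zb r) tb) (Derive (fun r => a zb r) tb) ep); auto.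
  + apply lnlt; auto. nra.
  + apply (flow_c tb zb Htb).
  + apply (flow_a tb zb Htb).
  + lra.
  + lra.
  + lra.
Qed.

End Main.

Theorem lemma3p2 (phi a b c : R -> R -> R) (T : Rbar) (lambda : R) :
  Rbar_lt (Finite 0) T ->
  ricci_flow_sol phi a b c T ->
  (forall z, a z 0 <= b z 0 /\ b z 0 <= c z 0) ->
  1 <= lambda ->
  (exists z0, 1 <= c z0 0 / a z0 0) ->
  (forall z, c z 0 / a z 0 <= lambda) ->
  forall z t, 0 <= t -> Rbar_lt (Finite t) T ->
    1 <= c z t / a z t /\ c z t / a z t <= lambda.
Proof.
  intros _ Hsol Hord Hl _ Hbnd z t Ht HtT.
  assert (Hs : 0 <= t <= t) by lra.
  destruct (pos phi a b c T t HtT Hsol t z Hs) as (?&?&?&?).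
  split.
  - destruct (step1c phi a b c T t Ht HtT Hsol Hord z t Hs) as [Hac _].
    assert (c z t / a z t - 1 = (c z t - a z t) * / a z t) by (field; lra).
    assert (0 <= (c z t - a z t) * / a z t) by (apply Rmult_le_pos; [lra| left; apply Rinv_0_lt_compat; lra]).
    lra.
  - assert (HL : ln (c z t) - ln (a z t) <= ln lambda).
    { apply Rnot_lt_le; intro Hlt.
      set (d := ln (c z t) - ln (a z t) - ln lambda).
      assert (Hs1 : 0 < 1 + t) by lra.
      pose proof (step2 phi a b c T t Ht HtT Hsol Hord lambda Hl Hbnd (d / (2 * (1 + t)))
                    ltac:(apply Rdiv_lt_0_compat; unfold d; lra) z t Hs) as H'.
      replace (d / (2 * (1 + t)) * (1 + t)) with (d / 2) in H' by (field; lra).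
      unfold d in *. lra. }
    rewrite <- ln_div in HL by lra.
    apply lnle; [apply Rdiv_lt_0_compat; lra| lra| auto].
Qed.
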